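(* In the optimal solution of the Sum Throughput Maximization Problem (STMP) defined in the context, for each user $i$ either the energy causality constraint $B_i+C_i\tau_0+C_i\sum_{j=1}^{N}a_{ji}\tau_j+C_i\tau_i-P_i\tau_i\ge 0$ or the constraint $P_i\le P_{max}$ is satisfied with equality; i.e., the user either transmits with maximum transmit power $P_{max}$ or consumes all the energy available to it until the completion of its transmission.
   Context: There are $N$ users, indexed $i=1,\dots,N$, transmitting to a hybrid access point by time division within a scheduling frame of normalized length $1$. Given constants: bandwidth $W>0$; for each user $i$, $k_i>0$, an energy harvesting rate $C_i\ge 0$, an initial battery level $B_i\ge 0$; and a maximum transmit power $P_{max}>0$. STMP is the problem maximize $\sum_{i=1}^{N} W\tau_i\log_2(1+k_iP_i)$ subject to, for all users $i$ (and all $j\neq i$ where relevant): $B_i+C_i\tau_0+C_i\sum_{j=1}^{N}a_{ji}\tau_j+C_i\tau_i-P_i\tau_i\ge 0$ (energy causality), $a_{ij}+a_{ji}=1$, $P_i\le P_{max}$, $\sum_{i=0}^{N}\tau_i\le 1$, over variables $P_i\ge 0$, $\tau_i\ge 0$ ($i=1,\dots,N$), $\tau_0\ge 0$, and $a_{ij}\in\{0,1\}$, where $P_i$ is the transmit power of user $i$, $\tau_i$ its transmission time, $a_{ij}=1$ iff user $i$ is scheduled before user $j$, and $\tau_0$ is an initial waiting time during which all users only harvest energy. *)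

(* Defs.v *)
From HB Require Import structures.
From mathcomp Require Import all_boot all_order all_algebra.
From mathcomp Require Import reals exp.
Set Implicit Arguments. Unset Strict Implicit. Unset Printing Implicit Defensive.
Import Order.TTheory GRing.Theory Num.Theory.
Local Open Scope ring_scope.

Section STMP.
Variables (R : realType) (N : nat).

Definition log2 (x : R) : R := ln x / ln 2.

Definition stmp_obj (W : R) (k : 'I_N -> R) (P tau : 'I_N -> R) : R :=
  \sum_(i < N) W * tau i * log2 (1 + k i * P i).

(* Energy available to user i minus energy consumed, i.e. the LHS of the
   energy causality constraint
   B_i + C_i tau_0 + C_i sum_{j<>i} a_{ji} tau_j + C_i tau_i - P_i tau_i. *)
Definition energy_slack (B C : 'I_N -> R) (P tau : 'I_N -> R) (tau0 : R)
    (a : 'I_N -> 'I_N -> bool) (i : 'I_N) : R :=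
  B i + C i * tau0 + C i * (\sum_(j < N | j != i) (a j i)%:R * tau j)
  + C i * tau i - P i * tau i.

Definition stmp_feasible (B C : 'I_N -> R) (Pmax : R)
    (P tau : 'I_N -> R) (tau0 : R) (a : 'I_N -> 'I_N -> bool) : Prop :=
  [/\ (forall i, 0 <= P i /\ P i <= Pmax),
      (forall i, 0 <= tau i) /\ 0 <= tau0,
      tau0 + \sum_(i < N) tau i <= 1,
      (forall i j, i != j -> (a i j)%:R + (a j i)%:R = 1 :> R)
    & (forall i, 0 <= energy_slack B C P tau tau0 a i)].

Definition stmp_optimal (W : R) (k B C : 'I_N -> R) (Pmax : R)
    (P tau : 'I_N -> R) (tau0 : R) (a : 'I_N -> 'I_N -> bool) : Prop :=
  stmp_feasible B C Pmax P tau tau0 a /\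
  forall P' tau' tau0' a',
    stmp_feasible B C Pmax P' tau' tau0' a' ->
    stmp_obj W k P' tau' <= stmp_obj W k P tau.

End STMP.

(* Main.v *)
Require Import Defs.
From HB Require Import structures.
From mathcomp Require Import all_boot all_order all_algebra.
From mathcomp Require Import reals exp.
From mathcomp Require Import ring lra.
Import Order.TTheory GRing.Theory Num.Theory.
Local Open Scope ring_scope.

Theorem lemma4 (R : realType) (N : nat) (W : R) (k B C : 'I_N -> R) (Pmax : R)
    (P tau : 'I_N -> R) (tau0 : R) (a : 'I_N -> 'I_N -> bool) :
  0 < W -> (forall i, 0 < k i) -> (forall i, 0 <= C i) ->
  (forall i, 0 <= B i) -> 0 < Pmax ->
  stmp_optimal W k B C Pmax P tau tau0 a ->
  forall i : 'I_N, 0 < tau i ->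
    energy_slack B C P tau tau0 a i = 0 \/ P i = Pmax.
Proof.
move=> W0 k0 C0 B0 Pm0 [[HP Htau Hsum Ha Hen] Hopt] i ti0.
have [sl0|slpos] := eqVneq (energy_slack B C P tau tau0 a i) 0; first by left.
have [PE|Pne] := eqVneq (P i) Pmax; first by right.
exfalso.
set s := energy_slack B C P tau tau0 a i in slpos.
have spos : 0 < s by rewrite lt_def slpos Hen.
have Plt : P i < Pmax by rewrite lt_def eq_sym Pne (proj2 (HP i)).
set d := Num.min (Pmax - P i) (s / tau i).
have d0 : 0 < d by rewrite lt_min subr_gt0 Plt divr_gt0.
have d1 : d <= Pmax - P i by rewrite ge_min lexx.
have d2 : d <= s / tau i by rewrite ge_min lexx orbT.
pose P' := fun j => if j == i then P i + d else P j.
have P'i : P' i = P i + d by rewrite /P' eqxx.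
have P'j : forall j, j != i -> P' j = P j by move=> j /negbTE; rewrite /P' => ->.
have feas : stmp_feasible B C Pmax P' tau tau0 a.
  split => //.
  - move=> j; have [->|ji] := eqVneq j i.
      rewrite P'i; split; last by rewrite -lerBrDl.
      by apply: addr_ge0; [exact: (proj1 (HP i))|exact: ltW].
    by rewrite P'j //; exact: HP.
  - move=> j; have [->|ji] := eqVneq j i.
      have -> : energy_slack B C P' tau tau0 a i = s - d * tau i.
        by rewrite /s /energy_slack P'i; ring.
      rewrite subr_ge0 -ler_pdivlMr //.
    by rewrite /energy_slack P'j //; exact: Hen.
have := Hopt _ _ _ _ feas; apply/negP; rewrite -ltNge.
rewrite /stmp_obj (bigD1 i) //= [X in _ < X](bigD1 i) //=.
have -> : \sum_(j < N | j != i) W * tau j * log2 (1 + k j * P' j) =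
          \sum_(j < N | j != i) W * tau j * log2 (1 + k j * P j).
  by apply: eq_bigr => j ji; rewrite P'j.
rewrite ltrD2r P'i ltr_pM2l; last by rewrite mulr_gt0.

have ln2 : 0 < ln (2:R) by apply: ln_gt0; rewrite ltr1n.
have p1 : 0 < 1 + k i * P i.
  by apply: ltr_wpDr; [apply: mulr_ge0; [exact: ltW|exact: (proj1 (HP i))]|].
have p2 : 1 + k i * P i < 1 + k i * (P i + d).
  by rewrite ltrD2l ltr_pM2l // ltrDl.
rewrite /log2 ltr_pM2r ?invr_gt0 //.
rewrite ltr_ln //; rewrite posrE //; exact: lt_trans p1 p2.
Qed.
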